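(* Let $e_1,\dots,e_k\in\mathbb{C}^{n\times n}$ be an anticommuting family, $n\ge1$. (i) If $\mathrm{rk}(e_i^2)=\mathrm{rk}(e_i^3)$ for every $i\in[k]$ (which holds in particular if every $e_i^2$ is diagonalisable), then $\sum_{i=1}^k\mathrm{rk}(e_i^2)\le (2\log_2 n+1)n$. (ii) If every $e_i$ is diagonalisable, then $\sum_{i=1}^k\mathrm{rk}(e_i)\le(2\log_2 n+1)n$.
   Context: A family $e_1,\dots,e_k$ of complex $n\times n$ matrices is called anticommuting if $e_ie_j=-e_je_i$ for all distinct $i,j\in[k]=\{1,\dots,k\}$. $\mathrm{rk}$ denotes matrix rank. *)

(* Defs.v *)
From Stdlib Require Import Reals.
From HB Require Import structures.
From mathcomp Require Import all_boot all_order all_algebra.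
Set Implicit Arguments. Unset Strict Implicit. Unset Printing Implicit Defensive.
Import GRing.Theory.

Definition anticommuting (F : pzRingType) (n k : nat) (e : 'I_k -> 'M[F]_n) : Prop :=
  forall i j : 'I_k, i != j -> (e i *m e j = - (e j *m e i))%R.

Definition log2R (x : R) : R := Rdiv (ln x) (ln (INR 2)).

Definition bound5 (n : nat) : R := Rmult (Rplus (Rmult (INR 2) (log2R (INR n))) (INR 1)) (INR n).

(* Main.v *)
Require Import Defs.
From Stdlib Require Import Reals Lra.
From HB Require Import structures.
From mathcomp Require Import all_boot all_order all_algebra.
From mathcomp Require Import zify.
Local Open Scope ring_scope.

Module Aux.
Set Implicit Arguments. Unset Strict Implicit. Unset Printing Implicit Defensive.
Import GRing.Theory Num.Theory.

Section RealPart.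
Local Open Scope R_scope.

Lemma INR_expn2 c : INR (2 ^ c)%N = (pow (INR 2) c).
Proof.
elim: c => [|c IH]; first by rewrite expn0 /=.
by rewrite expnS -multE mult_INR IH /=.
Qed.

Lemma ln_le x y : 0 < x -> x <= y -> ln x <= ln y.
Proof.
move=> x0 [h|->]; last by right.
by left; apply: ln_increasing.
Qed.

Lemma ln2_pos : (0 < ln (INR 2)).
Proof. rewrite -ln_1; apply: ln_increasing; simpl; lra. Qed.

Lemma bound5_0 : bound5 0 = 0.
Proof. by rewrite /bound5 /= Rmult_0_r. Qed.

Lemma boundR1 (c r : nat) : (0 < r)%N -> (2 ^ c <= 2 * (r * r))%N ->
  Rle (INR (c * r)) (bound5 r).
Proof.
move=> r0 h.
have hr : (1 <= INR r) by apply: (le_INR 1); apply/leP.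
have h' : (pow (INR 2) c <= INR 2 * (INR r * INR r)).
  rewrite -INR_expn2 -!mult_INR; apply: le_INR; apply/leP; exact h.
have hl : (ln (pow (INR 2) c) <= ln (INR 2 * (INR r * INR r))).
  apply: ln_le => //; apply: pow_lt; simpl; lra.
rewrite ln_pow in hl; last by simpl; lra.
rewrite !ln_mult in hl; try (simpl; nra).
have l2 := ln2_pos.
rewrite -multE mult_INR /bound5 /log2R.
apply: Rmult_le_compat_r; first lra.
have -> : INR 1 = 1 by [].
apply (Rmult_le_reg_r (ln (INR 2))) => //.
rewrite Rmult_plus_distr_r Rmult_1_l Rmult_assoc /Rdiv Rmult_assoc Rinv_l.
- rewrite Rmult_1_r; move: hl; set L := ln (INR 2); set L2 := ln (INR r); simpl INR; lra.
- lra.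
Qed.

Lemma boundR2 (a b : nat) : (0 < a)%N -> (0 < b)%N ->
  Rle (bound5 a + bound5 b) (bound5 (a + b)).
Proof.
move=> a0 b0.
have ha : (1 <= INR a) by apply: (le_INR 1); apply/leP.
have hb : (1 <= INR b) by apply: (le_INR 1); apply/leP.
have hab : INR (a + b) = (INR a + INR b) by rewrite -plusE plus_INR.
have la : (ln (INR a) <= ln (INR (a+b))) by apply: ln_le; lra.
have lb : (ln (INR b) <= ln (INR (a+b))) by apply: ln_le; lra.
have l2 := ln2_pos.
have da : (ln (INR a) / ln (INR 2) <= ln (INR (a+b)) / ln (INR 2)).
  apply: Rmult_le_compat_r => //; apply: Rlt_le; apply: Rinv_0_lt_compat; lra.
have db : (ln (INR b) / ln (INR 2) <= ln (INR (a+b)) / ln (INR 2)).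
  apply: Rmult_le_compat_r => //; apply: Rlt_le; apply: Rinv_0_lt_compat; lra.
rewrite /bound5 /log2R hab. rewrite hab in da db.
move: da db; set X := ln (INR a) / _; set Y := ln (INR b) / _; set Z := ln _ / _ => da db.
have p1 : 0 <= (Z - X) * INR a by apply: Rmult_le_pos; lra.
have p2 : 0 <= (Z - Y) * INR b by apply: Rmult_le_pos; lra.
simpl INR; nra.
Qed.

End RealPart.


Section Key.
Variable (C : numClosedFieldType) (n : nat).

Lemma rank_sub_inj m (W f : 'M[C]_n) (E : 'M[C]_(m, n)) : (E <= W)%MS ->
  \rank (W *m f) = \rank W -> \rank (E *m f) = \rank E.
Proof.
move=> EW hW.
have h1 := mxrank_mul_ker W f; have h2 := mxrank_mul_ker E f.
have h3 : (\rank (E :&: kermx f) <= \rank (W :&: kermx f))%N.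
  by apply: mxrankS; apply: capmxS.
move: h1 h2 h3 hW.
set x1 := \rank (W *m f); set x2 := \rank (E *m f); lia.
Qed.

Lemma eigP m (X : 'M[C]_(m, n)) (g : 'M[C]_n) a :
  reflect (X *m g = a *: X) (X <= eigenspace g a)%MS.
Proof.
apply: (iffP sub_kermxP); rewrite mulmxBr mul_mx_scalar.
  by move/eqP; rewrite subr_eq0 => /eqP.
by move=> ->; rewrite subrr.
Qed.

Lemma exists_eig (W g : 'M[C]_n) : (0 < \rank W)%N -> (W *m g <= W)%MS ->
  exists a, exists v : 'rV[C]_n, [/\ v != 0, (v <= W)%MS & v *m g = a *: v].
Proof.
move=> W0 Wg.
set B := row_base W.
have BW : (B <= W)%MS by rewrite eq_row_base.
have BgB : (B *m g <= B)%MS.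
  by rewrite eq_row_base; apply: submx_trans Wg; apply: submxMr.
set g' := B *m g *m pinvmx B.
have [a ra] : exists a, root (char_poly g') a.
  by apply/closed_rootP; rewrite size_char_poly; lia.
have /eigenvalueP [u ug u0] : eigenvalue g' a by rewrite eigenvalue_root_char.
exists a, (u *m B); split.
- apply: contra u0 => /eqP h; apply/eqP; apply: (row_free_inj (row_base_free W)).
  by rewrite h mul0mx.
- exact: submx_trans (submxMl _ _) BW.
- have eB : B *m g = g' *m B by rewrite /g' mulmxKpV.
  by rewrite -mulmxA eB mulmxA ug scalemxAl.
Qed.

Lemma key k (e : 'I_k -> 'M[C]_n) (anti : anticommuting e) :
  forall m (l : seq 'I_k) (W : 'M[C]_n), (size l <= m)%N -> uniq l -> (0 < \rank W)%N ->
  (forall i, i \in l -> (W *m e i <= W)%MS) ->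
  (forall i, i \in l -> \rank (W *m e i) = \rank W) ->
  (2 ^ size l <= 2 * (\rank W * \rank W))%N.
Proof.
elim=> [|m IH] [|a [|b l]] W //= hs hu W0 hinv hrk; rewrite ?expn0 ?expn1; try nia.
move: hu; rewrite !inE negb_or => /andP[/andP[nab nal] /andP[nbl ul]].
have Wa : (W *m e a <= W)%MS by apply: hinv; rewrite inE eqxx.
have bin : b \in [:: a, b & l] by rewrite !inE eqxx orbT.
have Wb : (W *m e b <= W)%MS by apply: hinv.
set g := e a *m e b.
have Wg : (W *m g <= W)%MS by rewrite /g mulmxA; apply: submx_trans (submxMr _ Wa) Wb.
have [lam [v [v0 vW vg]]] := exists_eig W0 Wg.
have nba : b != a by rewrite eq_sym.
have ga : e a *m g = - (g *m e a).
  by rewrite /g -mulmxA (anti b a nba) mulmxN opprK.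
have gj : forall j, j \in l -> e j *m g = g *m e j.
  move=> j jl.
  have ja : j != a by apply: contraNneq nal => <-.
  have jb : j != b by apply: contraNneq nbl => <-.
  by rewrite /g mulmxA (anti j a ja) mulNmx -mulmxA (anti j b jb) mulmxN opprK mulmxA.
have la : lam != 0.
  apply/eqP => l0.
  have h0 : v *m e a *m e b = 0 by rewrite -mulmxA -/g vg l0 scale0r.
  have r1 := rank_sub_inj vW (hrk a (mem_head _ _)).
  have vaW : (v *m e a <= W)%MS := submx_trans (submxMr _ vW) Wa.
  have r2 := rank_sub_inj vaW (hrk b bin).
  move: r1 r2; rewrite h0 mxrank0 => -> /eqP; rewrite eq_sym mxrank_eq0; exact/negP.
set E := (W :&: eigenspace g lam)%MS.
set E' := (W :&: eigenspace g (- lam))%MS.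
have EW : (E <= W)%MS by apply: capmxSl.
have E'W : (E' <= W)%MS by apply: capmxSl.
have Eg : E *m g = lam *: E by apply/eigP; apply: capmxSr.
have E'g : E' *m g = (- lam) *: E' by apply/eigP; apply: capmxSr.
have E0 : (0 < \rank E)%N.
  have vE : (v <= E)%MS by rewrite sub_capmx vW; apply/eigP.
  by have := mxrankS vE; rewrite rank_rV v0.
have lin : forall j, j \in l -> j \in [:: a, b & l] by move=> j jl; rewrite !inE jl !orbT.
have IHE := IH l E (ltnW (ltnSE hs)) ul E0.
have IHE' : (2 ^ size l <= 2 * (\rank E * \rank E))%N.
  apply: IHE => j jl.
    rewrite sub_capmx (submx_trans (submxMr _ EW) (hinv j (lin j jl))) /=.
    by apply/eigP; rewrite -mulmxA gj // mulmxA Eg -scalemxAl.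
  exact: rank_sub_inj EW (hrk j (lin j jl)).
have EaE' : (E *m e a <= E')%MS.
  rewrite sub_capmx (submx_trans (submxMr _ EW) Wa) /=.
  by apply/eigP; rewrite -mulmxA ga mulmxN mulmxA Eg -scalemxAl scaleNr.
have rEa := rank_sub_inj EW (hrk a (mem_head _ _)).
have rEE' := mxrankS EaE'.
have disj : (E :&: E')%MS = 0.
  apply/eqP; rewrite -submx0; set X := (E :&: E')%MS.
  have h1 : X *m g = lam *: X.
    by apply/eigP; apply: submx_trans (capmxSl _ _) (capmxSr _ _).
  have h2 : X *m g = (- lam) *: X.
    by apply/eigP; apply: submx_trans (capmxSr _ _) (capmxSr _ _).
  have : lam *: X - (- lam) *: X = 0 by rewrite -h1 -h2 subrr.
  rewrite scaleNr opprK -scalerDl => /eqP; rewrite scaler_eq0 => /orP[|/eqP -> //].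
  by rewrite -mulr2n mulrn_eq0 /= (negbTE la).
have rsum := mxrank_disjoint_sum disj.
have rsW : (\rank (E + E')%MS <= \rank W)%N.
  by apply: mxrankS; rewrite addsmx_sub EW E'W.
move: IHE' rEa rEE' rsum rsW; rewrite !expnS.
set x := \rank E; set y := \rank E'; set z := \rank W; set w := \rank (E + E')%MS.
set t := \rank (E *m e a) => h1 h2 h3 h4 h5.
have h0 : (2 * x <= z)%N by clear -h2 h3 h4 h5; lia.
have h6 := leq_mul h0 h0; rewrite mulnACA in h6.
set p := (2 ^ size l)%N in h1 *; set q := (x * x)%N in h1 h6; set r := (z * z)%N in h6 *.
clear -h1 h6; lia.
Qed.
End Key.


Section Rec.
Variable (C : numClosedFieldType) (n k : nat) (e : 'I_k -> 'M[C]_n).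
Hypothesis anti : anticommuting e.
Hypothesis idx : forall i (Y : 'M[C]_n),
  Y *m (e i *m e i) *m (e i *m e i) = 0 -> Y *m (e i *m e i) = 0.

Lemma commA i j : e j *m (e i *m e i) = (e i *m e i) *m e j.
Proof.
case: (eqVneq i j) => [->|ij]; first by rewrite mulmxA.
have ji : j != i by rewrite eq_sym.
by rewrite mulmxA (@anti j i ji) mulNmx -mulmxA (@anti j i ji) mulmxN opprK mulmxA.
Qed.

Lemma inv2 (X : 'M[C]_n) j : (X *m e j <= X)%MS -> (X *m (e j *m e j) <= X)%MS.
Proof. by move=> h; rewrite mulmxA; apply: submx_trans (submxMr _ h) h. Qed.

Lemma split_rank (W1 W0 B : 'M[C]_n) : (W1 :&: W0)%MS = 0 ->
  (W1 *m B <= W1)%MS -> (W0 *m B <= W0)%MS ->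
  \rank ((W1 + W0)%MS *m B) = (\rank (W1 *m B) + \rank (W0 *m B))%N.
Proof.
move=> d h1 h0; rewrite (addsmxMr W1 W0 B) mxrank_disjoint_sum //.
by apply/eqP; rewrite -submx0 -d; apply: capmxS.
Qed.

Lemma zero_case (W : 'M[C]_n) : \rank W = 0%N ->
  Rle (INR (\sum_i \rank (W *m (e i *m e i)))) (bound5 (\rank W)).
Proof.
move=> r0; rewrite r0 bound5_0 big1 => [|i _]; first exact: Rle_refl.
by have := mxrankM_maxl W (e i *m e i); rewrite r0 leqn0 => /eqP.
Qed.

Lemma rec m : forall (W : 'M[C]_n), (\rank W <= m)%N -> (forall j, (W *m e j <= W)%MS) ->
  Rle (INR (\sum_i \rank (W *m (e i *m e i)))) (bound5 (\rank W)).
Proof.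
elim: m => [|m IH] W hm hinv.
  by apply: zero_case; move: hm; rewrite leqn0 => /eqP.
case: (posnP (\rank W)) => [rW0|rWpos]; first exact: zero_case.
case: (boolP [exists i, (0 < \rank (W *m (e i *m e i)) < \rank W)%N]).
- move=> /existsP [i /andP [p1 p2]].
  set A := e i *m e i in p1 p2.
  set W1 := W *m A; set W0 := (W :&: kermx A)%MS.
  have hk : (\rank W1 + \rank W0)%N = \rank W := mxrank_mul_ker W A.
  have disj : (W1 :&: W0)%MS = 0.
    apply/eqP; rewrite -submx0; set X := (W1 :&: W0)%MS.
    have /submxP [D eD] : (X <= W1)%MS by apply: capmxSl.
    have XA : X *m A = 0.
      by apply/sub_kermxP; apply: submx_trans (capmxSr _ _) (capmxSr _ _).
    have XA' : D *m W *m A *m A = 0 by rewrite -(mulmxA D W A) -/W1 -eD.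
    by rewrite submx0 eD /W1 (mulmxA D W A) (idx XA').
  have inv1 : forall j, (W1 *m e j <= W1)%MS.
    by move=> j; rewrite /W1 -mulmxA -commA mulmxA; apply: submxMr.
  have W0A : W0 *m A = 0 by apply/sub_kermxP; apply: capmxSr.
  have inv0 : forall j, (W0 *m e j <= W0)%MS.
    move=> j; rewrite sub_capmx (submx_trans (submxMr _ (capmxSl _ _)) (hinv j)) /=.
    by apply/sub_kermxP; rewrite -mulmxA commA mulmxA W0A mul0mx.
  have sub : (W1 + W0 <= W)%MS by rewrite addsmx_sub (capmxSl _ _) andbT /W1 inv2.
  have eqW : (W1 + W0 == W)%MS.
    by rewrite -(mxrank_leqif_eq sub).2 mxrank_disjoint_sum // hk.
  have spl : forall j, \rank (W *m (e j *m e j)) =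
      (\rank (W1 *m (e j *m e j)) + \rank (W0 *m (e j *m e j)))%N.
    move=> j; rewrite -split_rank ?inv2 //.
    by rewrite (eqmxMr _ (eqmxP eqW)).
  have -> : (\sum_i \rank (W *m (e i *m e i)) = \sum_i (\rank (W1 *m (e i *m e i)) + \rank (W0 *m (e i *m e i))))%N.
    by apply: eq_bigr => j _; apply: spl.
  rewrite big_split /= -plusE plus_INR.
  have r1 : (0 < \rank W1)%N by [].
  have r0 : (0 < \rank W0)%N by move: hk p2; rewrite -/W1; clear; lia.
  have m1 : (\rank W1 <= m)%N by move: hk hm r0; clear; lia.
  have m0 : (\rank W0 <= m)%N by move: hk hm r1; clear; lia.
  apply: Rle_trans (Rplus_le_compat _ _ _ _ (IH W1 m1 inv1) (IH W0 m0 inv0)) _.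
  by rewrite -hk; apply: boundR2.
- move/existsPn => hno.
  set P := [pred i | \rank (W *m (e i *m e i)) == \rank W].
  have sumE : (\sum_i \rank (W *m (e i *m e i)) = #|P| * \rank W)%N.
    rewrite -sum_nat_const [RHS]big_mkcond /=; apply: eq_bigr => i _.
    rewrite !inE; case: ifP => [/eqP //|/negbT hne].
    have := hno i; have := mxrankM_maxl W (e i *m e i).
    move: hne; set x := \rank (W *m (e i *m e i)); set y := \rank W.
    clear; lia.
  have keyb := key anti (leqnn (size (enum P))) (enum_uniq P) rWpos.
  have kb : (2 ^ #|P| <= 2 * (\rank W * \rank W))%N.
    rewrite cardE; apply: keyb => i; rewrite mem_enum => Pi; first exact: hinv.
    move: Pi; rewrite inE mulmxA => /eqP h.
    have := mxrankM_maxl (W *m e i) (e i); have := mxrankM_maxl W (e i).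
    rewrite h; set x := \rank (W *m e i); set y := \rank W; clear; lia.
  rewrite sumE; exact: (boundR1 rWpos kb).
Qed.
End Rec.


Section Fin.
Variable (C : numClosedFieldType) (n : nat).

Lemma ker_sub (f A : 'M[C]_n) : (forall Y : 'M[C]_n, Y *m f *m f = 0 -> Y *m f = 0) ->
  (A <= f)%MS -> \rank (A *m f) = \rank A.
Proof.
move=> hK Af; have h := mxrank_mul_ker A f.
suff c0 : (A :&: kermx f)%MS = 0 by move: h; rewrite c0 mxrank0 addn0.
apply/eqP; rewrite -submx0; set Z := (A :&: kermx f)%MS.
have /submxP [D eD] : (Z <= f)%MS by apply: submx_trans (capmxSl _ _) Af.
have Zf : Z *m f = 0 by apply/sub_kermxP; apply: capmxSr.
by rewrite submx0 eD hK // -eD.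
Qed.

Lemma idx_of_rank (f : 'M[C]_n) : \rank (f *m f) = \rank (f *m f *m f) ->
  forall Y : 'M[C]_n, Y *m (f *m f) *m (f *m f) = 0 -> Y *m (f *m f) = 0.
Proof.
move=> hst Y hY.
have h := mxrank_mul_ker (f *m f) f.
have c0 : (f *m f :&: kermx f)%MS = 0.
  have r0 : \rank (f *m f :&: kermx f)%MS = 0%N.
    move: h; rewrite -hst; set a := \rank (f *m f); set b := \rank _; clear; lia.
  by apply/eqP; rewrite -mxrank_eq0 r0.
have hZ : forall Z : 'M[C]_n, (Z <= f *m f)%MS -> Z *m f = 0 -> Z = 0.
  move=> Z ZA Zf; apply/eqP; rewrite -submx0 -c0 sub_capmx ZA /=; exact/sub_kermxP.
have Z1 : Y *m f *m (f *m f) = 0.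
  apply: hZ; first exact: submxMl.
  by move: hY; rewrite !mulmxA.
apply: hZ; first exact: submxMl.
by move: Z1; rewrite !mulmxA.
Qed.

Lemma diag_ker (d : 'rV[C]_n) (X : 'M[C]_n) :
  X *m diag_mx d *m diag_mx d = 0 -> X *m diag_mx d = 0.
Proof.
move/matrixP => h; apply/matrixP => i j; move: (h i j).
rewrite !mul_mx_diag !mxE => /eqP; rewrite mulf_eq0 => /orP[/eqP //|/eqP ->].
by rewrite mulr0.
Qed.

Lemma diag_K (f : 'M[C]_n) : diagonalizable f ->
  forall Y : 'M[C]_n, Y *m f *m f = 0 -> Y *m f = 0.
Proof.
case=> P Pu /diag_mxP [d]; rewrite conjumx // => eD Y hY.
have ef : f = invmx P *m diag_mx d *m P.
  by rewrite -eD !mulmxA mulVmx // mul1mx mulmxKV.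
set X := Y *m invmx P.
have h1 : X *m diag_mx d *m diag_mx d = 0.
  have e2 : Y *m f *m f = X *m diag_mx d *m diag_mx d *m P.
    by rewrite ef /X !mulmxA mulmxK.
  by have := congr1 (mulmx^~ (invmx P)) hY; rewrite mul0mx e2 mulmxK.
have -> : Y *m f = X *m diag_mx d *m P by rewrite ef /X !mulmxA.
by rewrite diag_ker // mul0mx.
Qed.
End Fin.


End Aux.
Import Aux.

Theorem mainTheorem5 (C : numClosedFieldType) (n k : nat) (e : 'I_k -> 'M[C]_n) :
  (0 < n)%N -> anticommuting e ->
  ((forall i : 'I_k, \rank (e i *m e i) = \rank (e i *m e i *m e i)) ->
     Rle (INR (\sum_(i < k) \rank (e i *m e i))) (bound5 n))
  /\
  ((forall i : 'I_k, diagonalizable (e i)) ->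
     Rle (INR (\sum_(i < k) \rank (e i))) (bound5 n)).
Proof.
move=> n0 anti.
have partI : (forall i : 'I_k, \rank (e i *m e i) = \rank (e i *m e i *m e i)) ->
     Rle (INR (\sum_(i < k) \rank (e i *m e i))) (bound5 n).
  move=> hst.
  have idx := fun i => idx_of_rank (hst i).
  have := @rec C n k e anti idx n 1%:M.
  rewrite mxrank1 => /(_ (leqnn n) (fun j => submx1 _)).
  by under eq_bigr => i _ do rewrite mul1mx.
split => // hd.
have r1 : forall i, \rank (e i *m e i) = \rank (e i).
  by move=> i; apply: ker_sub (diag_K (hd i)) (submx_refl _).
have r2 : forall i, \rank (e i *m e i *m e i) = \rank (e i *m e i).
  by move=> i; apply: ker_sub (diag_K (hd i)) (submxMl _ _).
under eq_bigr => i _ do rewrite -(r1 i).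
by apply: partI => i; rewrite r2.
Qed.
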